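(* The point $C_2=C_2(u)=\left(-\frac{a^2+b^2}{2a}\cos u,-\frac{a^2+b^2}{2b}\sin u\right)$ lies on $\mathcal{E}$ if and only if it equals one of the four points $$W=\frac{1}{2\sqrt{a^2+b^2}}\left(\pm a\sqrt{a^2+3b^2},\;\pm b\sqrt{3a^2+b^2}\right)$$ (all sign combinations). Moreover, whenever $C_2\in\mathcal{E}$, $C_2$ coincides with one of the points $P_1,P_2,P_3$.
   Context: Let $a>b>0$. Let $\mathcal{E}$ be the ellipse $x^2/a^2+y^2/b^2=1$, parametrized by $P(t)=(a\cos t,b\sin t)$. For $u\in\mathbb{R}$ let $M=(a\cos u,b\sin u)$, and for $i=1,2,3$ let $t_i=-u/3-2\pi(i-1)/3$ and $P_i=P(t_i)$ (the pre-images of the cusps of the negative pedal curve of $\mathcal{E}$ with respect to $M$). $C_2$ is the area centroid of that negative pedal curve. *)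

(* Defs.v *)
From Stdlib Require Import Reals.
Open Scope R_scope.

Definition ellP (a b t : R) : R * R := (a * cos t, b * sin t).

Definition on_ellipse (a b : R) (p : R * R) : Prop :=
  (fst p) ^ 2 / a ^ 2 + (snd p) ^ 2 / b ^ 2 = 1.

(* The cusp pre-image parameters t_i = -u/3 - 2 pi (i-1)/3, i = 1,2,3. *)
Definition cusp_t (u : R) (i : nat) : R := - u / 3 - 2 * PI * (INR i - 1) / 3.

(* The area centroid C_2(u) of the negative pedal curve, given explicitly. *)
Definition C2 (a b u : R) : R * R :=
  (- (a ^ 2 + b ^ 2) / (2 * a) * cos u, - (a ^ 2 + b ^ 2) / (2 * b) * sin u).

Definition sgn (s : bool) : R := if s then 1 else -1.

Definition W (a b : R) (s1 s2 : bool) : R * R :=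
  (/ (2 * sqrt (a ^ 2 + b ^ 2)) * (sgn s1 * a * sqrt (a ^ 2 + 3 * b ^ 2)),
   / (2 * sqrt (a ^ 2 + b ^ 2)) * (sgn s2 * b * sqrt (3 * a ^ 2 + b ^ 2))).

(* Main.v *)
Require Import Defs.
From Stdlib Require Import Reals Lra Psatz.
Open Scope R_scope.

Lemma key (A B k c s : R) : 0<B -> B<A -> k = A+B -> c^2+s^2=1 ->
  k^2*c^2*B^2 + k^2*s^2*A^2 = 4*A^2*B^2 -> k^3*c^2 = A^2*(A+3*B).
Proof. intros hB hA hk h1 h2.
assert (hs: s^2 = 1 - c^2) by lra. rewrite hs in h2. subst k.
assert (E: (B-A)*((A+B)^3*c^2 - A^2*(A+3*B)) = 0) by (rewrite <- (Rminus_diag_eq _ _ h2) ; ring).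
apply Rmult_integral in E. destruct E; lra. Qed.

Lemma sq_sign (p q : R) : p^2 = q^2 -> 0 <= p*q -> p = q.
Proof. intros h1 h2. assert ((p-q)*(p+q)=0) by nra.
apply Rmult_integral in H. destruct H; nra. Qed.

Lemma cmul0 (p1 p2 q1 q2 : R) : p1*q1 - p2*q2 = 0 -> p1*q2 + p2*q1 = 0 ->
  (p1 = 0 /\ p2 = 0) \/ (q1 = 0 /\ q2 = 0).
Proof. intros h1 h2.
assert (E: (p1^2+p2^2)*(q1^2+q2^2) = 0).
{ replace ((p1^2+p2^2)*(q1^2+q2^2)) with ((p1*q1 - p2*q2)^2 + (p1*q2+p2*q1)^2) by ring.
  rewrite h1, h2; ring. }
apply Rmult_integral in E. destruct E; [left|right]; split; nra. Qed.

Lemma on_iff (a b u : R) : 0 < b -> b < a ->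
  on_ellipse a b (C2 a b u) <->
  (a^2+b^2)^3*(cos u)^2 = a^4*(a^2+3*b^2).
Proof. intros hb hab. unfold on_ellipse, C2; cbn [fst snd].
assert (h1 := sin2_cos2 u). unfold Rsqr in h1.
set (c := cos u) in *. set (s := sin u) in *.
assert (ha : a <> 0) by lra. assert (hb' : b <> 0) by lra.
assert (E : (- (a ^ 2 + b ^ 2) / (2 * a) * c) ^ 2 / a ^ 2 +
   (- (a ^ 2 + b ^ 2) / (2 * b) * s) ^ 2 / b ^ 2 =
  ((a^2+b^2)^2*c^2*(b^2)^2 + (a^2+b^2)^2*s^2*(a^2)^2)/(4*(a^2)^2*(b^2)^2)) by (field; auto).
rewrite E. split; intro H.
- replace (a^4) with ((a^2)^2) by ring.
  apply (key (a^2) (b^2) (a^2+b^2) c s); try nra; auto.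
  apply (Rmult_eq_reg_r (/ (4 * (a ^ 2) ^ 2 * (b ^ 2) ^ 2))).
  unfold Rdiv in H. rewrite H. field; auto.
  apply Rinv_neq_0_compat. apply Rgt_not_eq.
  assert (0 < a^2) by nra. assert (0 < b^2) by nra.
  assert (0 < (a^2)^2) by nra. assert (0 < (b^2)^2) by nra.
  apply Rmult_lt_0_compat; [|lra]. lra.
- assert (hs: s^2 = 1 - c^2) by lra. rewrite hs.
  assert (0 < a^2) by nra. assert (0 < b^2) by nra.
  assert (0 < (a^2)^2) by nra. assert (0 < (b^2)^2) by nra.
  assert (p: 0 < (a^2)^2*(b^2)^2) by (apply Rmult_lt_0_compat; lra).
  apply (Rmult_eq_reg_r (4*(a^2)^2*(b^2)^2)); [|nra].
  unfold Rdiv. rewrite Rmult_assoc, Rinv_l; [|nra].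
  assert (Hm: (a^2+b^2)*((a^2+b^2)^2*c^2*(b^2)^2 + (a^2+b^2)^2*(1-c^2)*(a^2)^2) =
    (a^2+b^2)*(4*(a^2)^2*(b^2)^2)).
  { replace ((a^2+b^2)*((a^2+b^2)^2*c^2*(b^2)^2 + (a^2+b^2)^2*(1-c^2)*(a^2)^2))
      with (((a^2+b^2)^3*c^2)*((b^2)^2 - (a^2)^2) + (a^2+b^2)^3*(a^2)^2) by ring.
    rewrite H. ring. }
  apply Rmult_eq_reg_l in Hm; [|nra]. lra.
Qed.

Lemma cos3 x : cos (3*x) = cos x ^3 - 3 * cos x * sin x ^2.
Proof. replace (3*x) with (x+(x+x)) by ring. rewrite cos_plus, sin_plus, cos_plus; try rewrite sin_plus.
pose proof (sin2_cos2 x). unfold Rsqr in H. nra. Qed.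
Lemma sin3 x : sin (3*x) = 3 * cos x ^2 * sin x - sin x ^3.
Proof. replace (3*x) with (x+(x+x)) by ring. rewrite sin_plus, cos_plus, sin_plus; try rewrite cos_plus.
pose proof (sin2_cos2 x). unfold Rsqr in H. nra. Qed.

Lemma cos23 : cos (2*PI/3) = -1/2.
Proof. replace (2*PI/3) with (PI - PI/3) by field. rewrite Rtrigo_facts.cos_pi_minus, cos_PI3. field. Qed.
Lemma sin23 : sin (2*PI/3) = sqrt 3/2.
Proof. replace (2*PI/3) with (PI - PI/3) by field. rewrite sin_PI_x, sin_PI3. reflexivity. Qed.
Lemma cos43 : cos (4*PI/3) = -1/2.
Proof. replace (4*PI/3) with (PI/3 + PI) by field. rewrite neg_cos, cos_PI3. field. Qed.
Lemma sin43 : sin (4*PI/3) = - (sqrt 3/2).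
Proof. replace (4*PI/3) with (PI/3 + PI) by field. rewrite neg_sin, sin_PI3. reflexivity. Qed.

Lemma prod_id (X Y C S h : R) : h^2 = 3/4 ->
  let p2 := C*(-1/2) + S*h in let q2 := S*(-1/2) - C*h in
  let p3 := C*(-1/2) + S*(-h) in let q3 := S*(-1/2) - C*(-h) in
  ((X-C)*(X-p2) - (Y-S)*(Y-q2))*(X-p3) - ((X-C)*(Y-q2)+(Y-S)*(X-p2))*(Y-q3)
    = (X^3 - 3*X*Y^2) - (C^3 - 3*C*S^2) /\
  ((X-C)*(X-p2) - (Y-S)*(Y-q2))*(Y-q3) + ((X-C)*(Y-q2)+(Y-S)*(X-p2))*(X-p3)
    = (3*X^2*Y - Y^3) - (3*C^2*S - S^3).
Proof. intros hr p2 q2 p3 q3. unfold p2,q2,p3,q3. split; ring_simplify; rewrite ?hr; field. Qed.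

Lemma Wsq (k m sg p : R) : 0 < k -> 0 <= m -> sg^2 = 1 ->
  (/ (2 * sqrt k) * (sg * p * sqrt m))^2 = p^2*m/(4*k).
Proof. intros hk hm hs.
assert (hsk: 0 < sqrt k) by (apply sqrt_lt_R0; lra).
replace ((/ (2 * sqrt k) * (sg * p * sqrt m))^2) with (sg^2*p^2*(sqrt m ^2)/(4*(sqrt k^2))) by (field; lra).
rewrite !pow2_sqrt by lra. rewrite hs. field. lra. Qed.

Lemma Wpos (k m p : R) : 0 < k -> 0 < p -> 0 <= / (2 * sqrt k) * (p * sqrt m).
Proof. intros hk hp. assert (hsk: 0 < sqrt k) by (apply sqrt_lt_R0; lra).
apply Rmult_le_pos. left. apply Rinv_0_lt_compat. lra.
apply Rmult_le_pos. lra. apply sqrt_pos. Qed.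

Lemma sgn_sq s : sgn s ^ 2 = 1.
Proof. destruct s; simpl; ring. Qed.

Theorem proposition6p1 (a b u : R) (hb : 0 < b) (hab : b < a) :
  (on_ellipse a b (C2 a b u) <-> exists s1 s2 : bool, C2 a b u = W a b s1 s2) /\
  (on_ellipse a b (C2 a b u) ->
     exists i : nat, (i = 1%nat \/ i = 2%nat \/ i = 3%nat) /\
       C2 a b u = ellP a b (cusp_t u i)).
Proof.
assert (ha : 0 < a) by lra.
assert (hA : 0 < a^2) by nra. assert (hB : 0 < b^2) by nra.
set (k := a^2+b^2). assert (hk: 0 < k) by (unfold k; lra).
assert (h1 := sin2_cos2 u). unfold Rsqr in h1.
assert (Hs_of_c : (a^2+b^2)^3*(cos u)^2 = a^4*(a^2+3*b^2) ->
   (a^2+b^2)^3*(sin u)^2 = b^4*(3*a^2+b^2)).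
{ intro H. replace ((sin u)^2) with (1 - (cos u)^2) by nra.
  replace ((a^2+b^2)^3*(1-(cos u)^2)) with ((a^2+b^2)^3 - (a^2+b^2)^3*(cos u)^2) by ring.
  rewrite H. ring. }
split.
- rewrite on_iff by lra. split.
  + intro Hc. pose proof (Hs_of_c Hc) as Hs.
    assert (Ex : (- (a ^ 2 + b ^ 2) / (2 * a) * cos u)^2 = a^2*(a^2+3*b^2)/(4*k)).
    { replace ((- (a ^ 2 + b ^ 2) / (2 * a) * cos u)^2) with (((a^2+b^2)^3*(cos u)^2)/(4*a^2*k))
        by (unfold k; field; lra).
      rewrite Hc. field. lra. }
    assert (Ey : (- (a ^ 2 + b ^ 2) / (2 * b) * sin u)^2 = b^2*(3*a^2+b^2)/(4*k)).
    { replace ((- (a ^ 2 + b ^ 2) / (2 * b) * sin u)^2) with (((a^2+b^2)^3*(sin u)^2)/(4*b^2*k))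
        by (unfold k; field; lra).
      rewrite Hs. field. lra. }
    set (x := - (a ^ 2 + b ^ 2) / (2 * a) * cos u) in *.
    set (y := - (a ^ 2 + b ^ 2) / (2 * b) * sin u) in *.
    assert (Px := Wpos k (a^2+3*b^2) a hk ha).
    assert (Py := Wpos k (3*a^2+b^2) b hk hb).
    exists (if Rle_dec 0 x then true else false), (if Rle_dec 0 y then true else false).
    unfold C2, W. fold x y k. f_equal.
    * apply sq_sign. rewrite Wsq; [|lra|nra|apply sgn_sq]. rewrite Ex. field. lra.
      destruct (Rle_dec 0 x); cbn [sgn].
      -- rewrite Rmult_1_l. apply Rmult_le_pos; lra.
      -- replace (-1*a) with (-a) by ring.
         replace (/ (2 * sqrt k) * (- a * sqrt (a ^ 2 + 3 * b ^ 2))) with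
           (- (/ (2 * sqrt k) * (a * sqrt (a ^ 2 + 3 * b ^ 2)))) by ring. nra.
    * apply sq_sign. rewrite Wsq; [|lra|nra|apply sgn_sq]. rewrite Ey. field. lra.
      destruct (Rle_dec 0 y); cbn [sgn].
      -- rewrite Rmult_1_l. apply Rmult_le_pos; lra.
      -- replace (-1*b) with (-b) by ring.
         replace (/ (2 * sqrt k) * (- b * sqrt (3 * a ^ 2 + b ^ 2))) with
           (- (/ (2 * sqrt k) * (b * sqrt (3 * a ^ 2 + b ^ 2)))) by ring. nra.
  + intros [s1 [s2 HW]]. rewrite <- on_iff by lra. rewrite HW.
    unfold on_ellipse, W. cbn [fst snd].
    rewrite !Wsq; try apply sgn_sq; try lra; try nra.
    field. split; lra.
- rewrite on_iff by lra. intro Hc. pose proof (Hs_of_c Hc) as Hs.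
  set (c := cos u) in *. set (s := sin u) in *.
  set (X := - k * c / (2*a^2)). set (Y := - k * s / (2*b^2)).
  set (th := - u / 3).
  assert (Re : X^3 - 3*X*Y^2 = c).
  { replace (X^3 - 3*X*Y^2) with (-c*((a^2+b^2)^3*c^2)/(8*a^6) + 3*c*((a^2+b^2)^3*s^2)/(8*a^2*b^4))
      by (unfold X, Y, k; field; lra).
    rewrite Hc, Hs. field. lra. }
  assert (Im : 3*X^2*Y - Y^3 = - s).
  { replace (3*X^2*Y - Y^3) with (-3*s*((a^2+b^2)^3*c^2)/(8*a^4*b^2) + s*((a^2+b^2)^3*s^2)/(8*b^6))
      by (unfold X, Y, k; field; lra).
    rewrite Hc, Hs. field. lra. }
  assert (R3 : cos th ^3 - 3 * cos th * sin th ^2 = c).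
  { rewrite <- cos3. unfold th. replace (3 * (- u / 3)) with (- u) by field. apply cos_neg. }
  assert (I3 : 3 * cos th ^2 * sin th - sin th ^3 = - s).
  { rewrite <- sin3. unfold th. replace (3 * (- u / 3)) with (- u) by field. apply sin_neg. }
  assert (hh : (sqrt 3 / 2)^2 = 3/4).
  { replace ((sqrt 3 / 2)^2) with (sqrt 3 ^2 / 4) by field. rewrite pow2_sqrt; lra. }
  destruct (prod_id X Y (cos th) (sin th) (sqrt 3 / 2) hh) as [P1 P2].
  rewrite Re, R3 in P1. rewrite Im, I3 in P2.
  replace (c - c) with 0 in P1 by ring. replace (-s - -s) with 0 in P2 by ring.
  assert (EQ : forall t, X = cos t -> Y = sin t -> C2 a b u = ellP a b t).
  { intros t e1 e2. unfold C2, ellP. rewrite <- e1, <- e2. unfold X, Y, k.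
    unfold c, s. apply (f_equal2 pair); field; lra. }
  destruct (cmul0 _ _ _ _ P1 P2) as [[Q1 Q2]|[Q1 Q2]].
  + destruct (cmul0 _ _ _ _ Q1 Q2) as [[Z1 Z2]|[Z1 Z2]].
    * exists 1%nat. split; [left; reflexivity|]. apply EQ.
      -- replace (cusp_t u 1) with th by (unfold cusp_t, th; simpl; field). lra.
      -- replace (cusp_t u 1) with th by (unfold cusp_t, th; simpl; field). lra.
    * exists 2%nat. split; [right; left; reflexivity|].
      replace (cusp_t u 2) with (th - 2*PI/3) by (unfold cusp_t, th; simpl; field).
      apply EQ; [rewrite cos_minus, cos23, sin23 | rewrite sin_minus, cos23, sin23]; lra.
  + exists 3%nat. split; [right; right; reflexivity|].
    replace (cusp_t u 3) with (th - 4*PI/3) by (unfold cusp_t, th; simpl; field).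
    apply EQ; [rewrite cos_minus, cos43, sin43 | rewrite sin_minus, cos43, sin43]; lra.
Qed.
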